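(* Let $G=K(n_1,\dots,n_s)$ be a complete $s$-partite graph ($s\ge 2$) with parts $V_1,\dots,V_s$, $|V_j|=n_j$, $n_1\ge n_2\ge\cdots\ge n_s$, such that $3\le n_1\le 5$ and $n_2=2$. Then there is an optimal $3$-relaxed coloring of $G$ which assigns the same color to three vertices of $V_1$ and both vertices of $V_2$.
   Context: A map $f$ from $V(G)$ to a finite set of colors is a $3$-relaxed coloring if every vertex $u$ has at most $3$ neighbors $v$ with $f(v)=f(u)$; it is optimal if it uses the minimum possible number $\chi_3(G)$ of colors. *)

(* Defs.v *)
From mathcomp Require Import all_boot.
Set Implicit Arguments. Unset Strict Implicit. Unset Printing Implicit Defensive.

(* Parts are indexed from 0, so the paper's V_1 is part 0 and V_2 is part 1. *)
Definition kpart_vertex (s : nat) (n : nat -> nat) : finType :=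
  {j : 'I_s & 'I_(n j)}.

Definition part (s : nat) (n : nat -> nat) (v : kpart_vertex s n) : nat :=
  val (tag v).

Definition kpart_adj (s : nat) (n : nat -> nat) : rel (kpart_vertex s n) :=
  fun u v => tag u != tag v.

Definition relaxed3 (T : finType) (e : rel T) (C : finType) (f : T -> C) :=
  forall u : T, #|[set v | e u v && (f v == f u)]| <= 3.

(* f is an optimal 3-relaxed coloring: it is 3-relaxed and the number of
   colours it uses is at most the number of colours used by any 3-relaxed
   coloring (any finite colour set can be injected into some 'I_m). *)
Definition optimal_relaxed3 (T : finType) (e : rel T) (C : finType)
    (f : T -> C) :=
  relaxed3 e f /\
  forall (m : nat) (g : T -> 'I_m), relaxed3 e g -> #|f @: T| <= #|g @: T|.

(* Main.v *)
Require Import Defs.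
From mathcomp Require Import all_boot zify.
Set Implicit Arguments. Unset Strict Implicit. Unset Printing Implicit Defensive.

Lemma card_inj_bound (X : finType) (B : {set X}) (h : X -> nat) M :
  {in B &, injective h} -> (forall x, x \in B -> h x < M) -> #|B| <= M.
Proof.
move=> inj bd; rewrite cardE -(size_map h) -(size_iota 0 M).
apply: uniq_leq_size.
  rewrite map_inj_in_uniq ?enum_uniq // => x y; rewrite !mem_enum; exact: inj.
move=> y /mapP [x]; rewrite mem_enum => xB ->; rewrite mem_iota /= add0n; exact: bd.
Qed.

Lemma part_bound s n (j : 'I_s) (B : {set kpart_vertex s n}) :
  (forall w, w \in B -> tag w = j) -> #|B| <= n j.
Proof.
move=> Hj; apply: (@card_inj_bound _ _ (fun w => val (tagged w))).
  move=> [j1 i1] [j2 i2] /Hj /= e1 /Hj /= e2; subst j1 j2 => /= e.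
  by rewrite (val_inj e).
by move=> [j1 i1] /Hj /= e; subst j1.
Qed.

Section Lower.
Definition blk s n m (g : kpart_vertex s n -> 'I_m) c (u : kpart_vertex s n) :=
  [set w | (g w == c) && (tag w == tag u)].
Definition cls s n m (g : kpart_vertex s n -> 'I_m) c := [set w | g w == c].

Lemma deg_bound s n m (g : kpart_vertex s n -> 'I_m) u :
  relaxed3 (@kpart_adj s n) g -> #|cls g (g u)| <= #|blk g (g u) u| + 3.
Proof.
move=> /(_ u) H.
have E : [set v | kpart_adj u v && (g v == g u)] = cls g (g u) :\: blk g (g u) u.
  apply/setP => w; rewrite !inE /kpart_adj; case: (g w == g u); rewrite ?andbF ?andbT //=.
  by rewrite eq_sym.
move: H; rewrite E cardsD (setIidPr _); first lia.
by apply/subsetP => w; rewrite !inE => /andP[].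
Qed.
End Lower.

Definition P0 s n := [set w : kpart_vertex s n | val (tag w) == 0].

Lemma blk_small s n m (g : kpart_vertex s n -> 'I_m) c u :
  (forall i j, i <= j -> j < s -> n j <= n i) -> n 1 = 2 ->
  g u = c -> #|cls g c :&: P0 s n| <= 2 -> #|blk g c u| <= 2.
Proof.
move=> Hmono n1 gu H; case: (val (tag u) =P 0) => [t0|t0].
  apply: leq_trans (subset_leq_card _) H; apply/subsetP => w.
  by rewrite !inE => /andP[-> /eqP ->]; rewrite t0.
apply: leq_trans (@part_bound _ _ (tag u) _ _) _.
  by move=> w; rewrite inE => /andP[_ /eqP].
rewrite -n1; apply: Hmono; last exact: ltn_ord.
by rewrite lt0n; apply/eqP.
Qed.

Lemma big_class s n m (g : kpart_vertex s n -> 'I_m) c :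
  relaxed3 (@kpart_adj s n) g ->
  (forall i j, i <= j -> j < s -> n j <= n i) -> n 1 = 2 ->
  5 <= #|cls g c| -> 3 <= #|cls g c :&: P0 s n|.
Proof.
move=> Hr Hmono n1 C5; rewrite leqNgt; apply/negP; rewrite ltnS => HP.
have HA u : g u = c -> #|blk g c u| <= 2.
  by move=> gu; apply: blk_small.
have Hd u : g u = c -> #|cls g c| <= #|blk g c u| + 3.
  by move=> <-; apply: deg_bound.
have Hsub u : g u = c -> blk g c u \subset cls g c.
  by move=> _; apply/subsetP => w; rewrite !inE => /andP[].
have cardD (X Y : {set kpart_vertex s n}) : Y \subset X -> #|X :\: Y| = #|X| - #|Y|.
  by move=> sYX; rewrite cardsD (setIidPr sYX).
have : cls g c != set0 by rewrite -card_gt0; lia.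
case/set0Pn => u; rewrite inE => /eqP gu.
have C1 : #|cls g c :\: blk g c u| = 3.
  rewrite cardD ?Hsub //; have := HA u gu; have := Hd u gu; lia.
have : cls g c :\: blk g c u != set0 by rewrite -card_gt0 C1.
case/set0Pn => w; rewrite !inE => /andP[tw /eqP gw]; rewrite gw eqxx /= in tw.
have sw : blk g c w \subset cls g c :\: blk g c u.
  apply/subsetP => y; rewrite !inE => /andP[-> /eqP ->]; by rewrite tw.
have C2 : #|(cls g c :\: blk g c u) :\: blk g c w| = 1.
  rewrite cardD // C1; have := HA w gw; have := Hd w gw; lia.
have : (cls g c :\: blk g c u) :\: blk g c w != set0 by rewrite -card_gt0 C2.
case/set0Pn => x; rewrite !inE => /andP[tx /andP[tx' /eqP gx]].
rewrite gx eqxx /= in tx tx'.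
have sx : blk g c x \subset (cls g c :\: blk g c u) :\: blk g c w.
  apply/subsetP => y; rewrite !inE => /andP[-> /eqP ->]; by rewrite tx tx'.
have := subset_leq_card sx; rewrite C2; have := HA x gx; have := Hd x gx; lia.
Qed.

Lemma class_le5 s n m (g : kpart_vertex s n -> 'I_m) c :
  relaxed3 (@kpart_adj s n) g -> 0 < s ->
  (forall i j, i <= j -> j < s -> n j <= n i) -> n 1 = 2 -> n 0 <= 5 ->
  #|cls g c| <= 5.
Proof.
move=> Hr s0 Hmono n1 n05.
case: (boolP [exists u, (g u == c) && (val (tag u) != 0)]).
  case/existsP => u /andP[/eqP gu t0].
  have := deg_bound u Hr; rewrite gu.
  suff : #|blk g c u| <= 2 by lia.
  apply: leq_trans (@part_bound _ _ (tag u) _ _) _.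
    by move=> w; rewrite inE => /andP[_ /eqP].
  rewrite -n1; apply: Hmono; last exact: ltn_ord.
  by rewrite lt0n.
rewrite negb_exists => /forallP Hu.
apply: leq_trans (@part_bound _ _ (Ordinal s0) _ _) n05.
move=> w; rewrite inE => gw; apply: val_inj => /=.
by have := Hu w; rewrite gw /= negbK => /eqP.
Qed.

Lemma P0_bound s n (s0 : 0 < s) : #|P0 s n| <= n 0.
Proof.
apply: (@part_bound _ _ (Ordinal s0)) => w; rewrite inE => /eqP t0.
by apply: val_inj.
Qed.

Lemma lower_bound s n m (g : kpart_vertex s n -> 'I_m) :
  relaxed3 (@kpart_adj s n) g -> 0 < s ->
  (forall i j, i <= j -> j < s -> n j <= n i) -> n 1 = 2 -> n 0 <= 5 ->
  #|kpart_vertex s n| <= 4 * #|g @: kpart_vertex s n| + 1.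
Proof.
move=> Hr s0 Hmono n1 n05.
set K := g @: kpart_vertex s n.
have Hsum : #|kpart_vertex s n| = \sum_(c in K) #|cls g c|.
  rewrite -sum1_card (partition_big_imset g) /=; apply: eq_bigr => c _.
  by rewrite -sum1_card; apply: eq_bigl => v; rewrite !inE.
rewrite Hsum.
case: (boolP [exists c in K, 4 < #|cls g c|]).
  case/exists_inP => c0 c0K big0; rewrite (bigD1 c0) //=.
  rewrite (eq_bigl (fun c => c \in K :\ c0)); last first.
    by move=> c; rewrite !inE andbC.
  have rest : \sum_(c in K :\ c0) #|cls g c| <= \sum_(c in K :\ c0) 4.
    apply: leq_sum => c; rewrite !inE => /andP[cne _].
    rewrite leqNgt; apply/negP => bigc.
    have h1 := big_class Hr Hmono n1 bigc.
    have h2 := big_class Hr Hmono n1 big0.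
    have := cardsUI (cls g c :&: P0 s n) (cls g c0 :&: P0 s n).
    have -> : (cls g c :&: P0 s n) :&: (cls g c0 :&: P0 s n) = set0.
      apply/setP => v; rewrite !inE; case: (g v =P c) => //= ->.
      by rewrite (negbTE cne) andbF.
    rewrite cards0 addn0.
    have : #|(cls g c :&: P0 s n) :|: (cls g c0 :&: P0 s n)| <= #|P0 s n|.
      by apply: subset_leq_card; rewrite subUset !subsetIr.
    have := P0_bound n s0; lia.
  move: rest; rewrite sum_nat_const.
  have := cardsD1 c0 K; rewrite c0K /=.
  have := class_le5 c0 Hr s0 Hmono n1 n05; move=> h5 hK hr; apply: leq_trans (leq_add h5 hr) _; lia.
rewrite negb_exists_in => /forall_inP H.
apply: leq_trans (leq_addr _ _); rewrite mulnC -sum_nat_const.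
by apply: leq_sum => c /H; rewrite -leqNgt.
Qed.

Lemma part_boundM s n (j : 'I_s) M (B : {set kpart_vertex s n}) :
  (forall w, w \in B -> tag w = j) -> (forall w, w \in B -> val (tagged w) < M) ->
  #|B| <= M.
Proof.
move=> Hj HM; apply: (@card_inj_bound _ _ (fun w => val (tagged w))); last exact: HM.
move=> [j1 i1] [j2 i2] /Hj /= e1 /Hj /= e2; subst j1 j2 => /= e.
by rewrite (val_inj e).
Qed.

Theorem lemma5p4 (s : nat) (n : nat -> nat) :
  2 <= s ->
  (forall j, j < s -> 0 < n j) ->
  (forall i j, i <= j -> j < s -> n j <= n i) ->
  3 <= n 0 <= 5 ->
  n 1 = 2 ->
  exists (k : nat) (f : kpart_vertex s n -> 'I_k),
    optimal_relaxed3 (@kpart_adj s n) f /\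
    exists u1 u2 u3 : kpart_vertex s n,
      [/\ part u1 = 0, part u2 = 0 & part u3 = 0] /\
      uniq [:: u1; u2; u3] /\
      f u1 = f u2 /\ f u2 = f u3 /\
      (forall v : kpart_vertex s n, part v = 1 -> f v = f u1).
Proof.
move=> s2 Hpos Hmono /andP[n03 n05] n1.
have s0 : 0 < s by lia.
have s1 : 1 < s by lia.
pose j0 : 'I_s := Ordinal s0.
pose j1 : 'I_s := Ordinal s1.
have n0p : 0 < n j0 by rewrite /=; lia.
have n1p : 0 < n j1 by rewrite /= n1.
pose o0 : 'I_(n j0) := Ordinal n0p.
pose o1 : 'I_(n j1) := Ordinal n1p.
pose e0 i : kpart_vertex s n := existT (fun j : 'I_s => 'I_(n j)) j0 (insubd o0 i).
pose e1 i : kpart_vertex s n := existT (fun j : 'I_s => 'I_(n j)) j1 (insubd o1 i).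
have He0 i : i < 3 -> (tagged (e0 i) : nat) = i.
  by move=> hi; rewrite /= val_insubd /=; have -> : i < n 0 by lia.
have He1 i : i < 2 -> (tagged (e1 i) : nat) = i.
  by move=> hi; rewrite /= val_insubd /= n1 hi.
pose inA (v : kpart_vertex s n) :=
  (((tag v : nat) == 0) && ((tagged v : nat) < 3)) || ((tag v : nat) == 1).
pose A := [set v | inA v].
pose sq := enum (~: A).
pose N := #|kpart_vertex s n|.
pose idx v := index v sq.
pose f (v : kpart_vertex s n) : 'I_N.+1 :=
  if inA v then ord0 else inord (1 + idx v %/ 4).
have cardA : #|A| + #|~: A| = N by rewrite cardsC.
have idx_lt v : ~~ inA v -> idx v < #|~: A|.
  by move=> hv; rewrite cardE index_mem mem_enum !inE.
have fA v : inA v -> f v = ord0 by rewrite /f => ->.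
have fnA v : ~~ inA v -> (f v : nat) = 1 + idx v %/ 4.
  move=> hv; rewrite /f (negbTE hv) inordK //.
  have := idx_lt v hv; have := leq_div (idx v) 4; lia.
have A5 : 5 <= #|A|.
  pose h (i : 'I_5) := if i < 3 then e0 i else e1 (i - 3).
  pose dec (v : kpart_vertex s n) : 'I_5 :=
    inord (if val (tag v) == 0 then val (tagged v) else 3 + val (tagged v)).
  have hK : cancel h dec.
    move=> i; apply: val_inj; rewrite /h; case: ifP => hi; rewrite /dec /=.
      have hi0 : i < 3 by [].
      by have := He0 i hi0; rewrite /= => ->; rewrite inordK.
    have hi1 : i - 3 < 2 by have := ltn_ord i; lia.
    have := He1 _ hi1; rewrite /= => ->; rewrite inordK; have := ltn_ord i; lia.
  have := card_imset (mem [set: 'I_5]) (can_inj hK); rewrite cardsT card_ord => <-.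
  apply: subset_leq_card; apply/subsetP => v /imsetP [i _ ->].
  rewrite inE /inA /h; case: ifP => hi.
    by rewrite He0 // hi.
  by apply/orP; right.
exists N.+1, f; split; last first.
  exists (e0 0), (e0 1), (e0 2); split; first by [].
  split.
    have d i j : i < 3 -> j < 3 -> i != j -> e0 i != e0 j.
      move=> hi hj hij; apply/eqP => /(congr1 (fun v : kpart_vertex s n => nat_of_ord (tagged v))).
      by rewrite !He0 //; apply/eqP.
    by rewrite /= !inE negb_or !d.
  have iA i : i < 3 -> inA (e0 i) by move=> hi; rewrite /inA He0 // hi.
  rewrite !fA ?iA //; split; first by [].
  split; first by [].
  by move=> v pv; rewrite fA // /inA; apply/orP; right; apply/eqP.
have eN : N = #|kpart_vertex s n| by [].
split.
  move=> u; case: (boolP (inA u)) => hu.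
    have fu := fA u hu.
    have sub : [set v | kpart_adj u v && (f v == f u)] \subset
               [set v | inA v && (tag u != tag v)].
      apply/subsetP => v; rewrite !inE /kpart_adj fu => /andP[tuv fv]; rewrite tuv andbT.
      apply: contraLR fv => hv; apply/negP => /eqP e.
      by move: (fnA v hv); rewrite e /=; lia.
    apply: leq_trans (subset_leq_card sub) _.
    case/orP: hu => [/andP[/eqP t0 _] | /eqP t1].
      apply: leq_trans (@part_bound _ _ j1 _ _) _; last by rewrite /= n1.
      move=> w; rewrite inE => /andP[hw tw]; apply: val_inj => /=.
      case/orP: hw => [/andP[/eqP tw0 _]|/eqP //].
      have e : tag u = tag w by apply: val_inj; rewrite /= t0 tw0.
      by rewrite e eqxx in tw.
    apply: (@part_boundM _ _ j0) => w; rewrite inE => /andP[hw tw].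
      apply: val_inj => /=.
      case/orP: hw => [/andP[/eqP tw0 _]|/eqP tw1] //.
      have e : tag u = tag w by apply: val_inj; rewrite /= t1 tw1.
      by rewrite e eqxx in tw.
    case/orP: hw => [/andP[_ ->]|/eqP tw1] //.
    have e : tag u = tag w by apply: val_inj; rewrite /= t1 tw1.
    by rewrite e eqxx in tw.
  pose B := [set v | ~~ inA v && (idx v %/ 4 == idx u %/ 4)].
  have sub : [set v | kpart_adj u v && (f v == f u)] \subset B :\ u.
    apply/subsetP => v; rewrite !inE /kpart_adj => /andP[tuv fv].
    have vu : v != u by apply: contraNneq tuv => ->.
    rewrite vu /=.
    case: (boolP (inA v)) => hv.
      move: fv; rewrite fA // => /eqP e; move: (fnA u hu); rewrite -e /=; lia.
    move/eqP: fv => /(congr1 (@nat_of_ord _)); rewrite !fnA // => e.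
    apply/eqP; lia.
  apply: leq_trans (subset_leq_card sub) _.
  have uB : u \in B by rewrite inE hu eqxx.
  have B4 : #|B| <= 4.
    apply: (@card_inj_bound _ _ (fun v => idx v %% 4)); last first.
      by move=> x _; rewrite ltn_mod.
    move=> x y; rewrite !inE => /andP[hx /eqP ex] /andP[hy /eqP ey] em.
    have IJ : {in sq &, injective (index ^~ sq)} by apply: index_inj.
    apply: IJ; rewrite ?mem_enum ?inE //.
    by rewrite /= (divn_eq (index x sq) 4) (divn_eq (index y sq) 4); rewrite /idx in ex ey em; rewrite ex ey em.
  have := cardsD1 u B; rewrite uB; lia.
move=> m g Hg.
have LB := lower_bound Hg s0 Hmono n1 n05.
have K1 : 0 < #|g @: kpart_vertex s n|.
  by rewrite card_gt0; apply/set0Pn; exists (g (e0 0)); apply: imset_f.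
have FB : #|f @: kpart_vertex s n| <= 1 + (N - 2) %/ 4.
  apply: (@card_inj_bound _ _ (@nat_of_ord _)); first by move=> x y _ _; apply: val_inj.
  move=> c /imsetP [v _ ->]; case: (boolP (inA v)) => hv.
    by rewrite fA.
  rewrite fnA //; have := idx_lt v hv; lia.
lia.
Qed.
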